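(* Assume the standing setup and let $I\subseteq[k]$ be such that $\{\alpha_l\mid l\in I\}$ is a basis of $V_1$ (so that $\{\beta_l\mid l\in I\}$ is a basis of $V_2$). Let $h\in[k]\setminus I$ and $j\in I$, and write $\alpha_h=\sum_{l\in I}a_l\alpha_l$, $\beta_h=\sum_{l\in I}b_l\beta_l$ with $a_l,b_l\in\mathbb{F}$. If $a_j\neq0$, then for any distinct $i_2,\dots,i_d\in I\setminus\{j\}$, we have $$\zeta_{j,i_2,\dots,i_d}\,a_j=\zeta_{h,i_2,\dots,i_d}\,b_j,$$ where $\zeta_{l_1,\dots,l_d}$ denotes the nonzero scalar with $\psi(\alpha_{l_1}\wedge\cdots\wedge\alpha_{l_d})=\zeta_{l_1,\dots,l_d}\,\beta_{l_1}\wedge\cdots\wedge\beta_{l_d}$ (which exists for both index tuples $(j,i_2,\dots,i_d)$ and $(h,i_2,\dots,i_d)$).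
   Context: Standing setup: $\mathbb{F}$ is a field of characteristic $0$; $W$ is a group with finite generating set $S=\{s_1,\dots,s_k\}$. A linear map on a finite-dimensional space is a (generalized) reflection if it is diagonalizable and $s-\operatorname{Id}$ has rank $1$; a reflection vector is a nonzero vector in $\operatorname{Im}(s-\operatorname{Id})$. $(V_1,\rho_1)$, $(V_2,\rho_2)$ are irreducible reflection representations of $(W,S)$ (each $s_i$ acts by a reflection), both of dimension $n$. For each $i\in[k]$, $\alpha_i\in V_1$ is a chosen reflection vector of $s_i$ and $\beta_i\in V_2$ a chosen reflection vector of $s_i$. $d$ is an integer with $1\le d\le n-1$, and $\psi:\bigwedge^dV_1\to\bigwedge^dV_2$ is an isomorphism of $W$-modules ($W$ acting diagonally). Whenever $\alpha_{l_1},\dots,\alpha_{l_d}$ are linearly independent, so are $\beta_{l_1},\dots,\beta_{l_d}$, and $\psi$ maps $\alpha_{l_1}\wedge\cdots\wedge\alpha_{l_d}$ to a nonzero multiple of $\beta_{l_1}\wedge\cdots\wedge\beta_{l_d}$. *)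

(* Defs.v *)
From HB Require Import structures.
From mathcomp Require Import monoid.
From mathcomp Require Import all_boot all_order all_algebra.
Set Implicit Arguments. Unset Strict Implicit. Unset Printing Implicit Defensive.
Import GRing.Theory.
Local Open Scope ring_scope.

Definition dsub (n d : nat) := {J : {set 'I_n} | #|J| == d}.
(* the space bigwedge^d F^n, coordinates w.r.t. the basis e_J, J a d-subset *)
Notation extp F n d := {ffun dsub n d -> (F%type)^o}.

Section Defs.
Variable F : fieldType.

Definition generates (W : groupType) (k : nat) (s : 'I_k -> W) : Prop :=
  forall P : W -> Prop,
    P 1%g -> (forall i, P (s i)) ->
    (forall x y, P x -> P y -> P (x * y)%g) ->
    (forall x, P x -> P (x^-1)%g) -> forall w, P w.

Definition is_rep (W : groupType) (n : nat) (rho : W -> 'M[F]_n) : Prop :=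
  rho 1%g = 1%:M /\ forall x y, rho (x * y)%g = rho x *m rho y.

Definition reflection (n : nat) (A : 'M[F]_n) : Prop :=
  diagonalizable A /\ \rank (A - 1%:M) = 1%N.

Definition refl_vec (n : nat) (A : 'M[F]_n) (v : 'cV[F]_n) : Prop :=
  v != 0 /\ exists u : 'cV[F]_n, v = (A - 1%:M) *m u.

Definition invariant (W : groupType) (n : nat) (rho : W -> 'M[F]_n)
  (U : {vspace 'cV[F]_n}) : Prop :=
  forall w v, v \in U -> rho w *m v \in U.

Definition irreducible_rep (W : groupType) (n : nat) (rho : W -> 'M[F]_n) : Prop :=
  (0 < n)%N /\
  forall U : {vspace 'cV[F]_n}, invariant rho U -> U = 0%VS \/ U = fullv.

Definition refl_rep (W : groupType) (k n : nat) (s : 'I_k -> W)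
  (rho : W -> 'M[F]_n) : Prop :=
  is_rep rho /\ forall i, reflection (rho (s i)).


(* the a-th element (in increasing order) of the d-subset J *)
Definition elt (n d : nat) (J : dsub n d) (a : 'I_d) : 'I_n :=
  @enum_val _ (pred_of_set (val J)) (cast_ord (esym (eqP (valP J))) a).

Definition wedge (n d : nat) (v : 'I_d -> 'cV[F]_n) : extp F n d :=
  [ffun J => \det (\matrix_(a < d, b < d) v b (elt J a) 0)].

Definition minor (n d : nat) (g : 'M[F]_n) (J K : dsub n d) : F :=
  \det (\matrix_(a < d, b < d) g (elt J a) (elt K b)).

(* diagonal action of g on bigwedge^d F^n (d-th compound matrix):
   ext_act g (v_1 /\ ... /\ v_d) = g v_1 /\ ... /\ g v_d *)
Definition ext_act (n d : nat) (g : 'M[F]_n) (x : extp F n d) : extp F n d :=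
  [ffun J => \sum_(K : dsub n d) minor g J K * x K].

Definition tup (k d : nat) (j : 'I_k) (i : 'I_d -> 'I_k) : 'I_d -> 'I_k :=
  fun a => if val a == 0%N then j else i a.

Definition fam (k n d : nat) (al : 'I_k -> 'cV[F]_n) (l : 'I_d -> 'I_k) :
  seq 'cV[F]_n := [seq al (l a) | a <- enum 'I_d].

End Defs.

(* Main.v *)
Require Import Defs.
From HB Require Import structures.
From mathcomp Require Import monoid.
From mathcomp Require Import all_boot all_order all_algebra.
Set Implicit Arguments. Unset Strict Implicit. Unset Printing Implicit Defensive.
Import GRing.Theory.
Local Open Scope ring_scope.

Section H.
Variable F : fieldType.
Variables (n d : nat).

Definition indep (u : 'I_d -> 'cV[F]_n) :=
  forall x : 'I_d -> F, \sum_b x b *: u b = 0 -> forall b, x b = 0.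

Lemma extpE (f g : extp F n d) (c : F) J : (c *: f + g) J = c * f J + g J.
Proof. by rewrite !ffunE. Qed.

Lemma extp0E J : (0 : extp F n d) J = 0.
Proof. by rewrite ffunE. Qed.

Lemma indep_free u : indep u -> free [seq u a | a <- enum 'I_d].
Proof.
move=> Hu; apply/(@freeP _ _ d (map_tuple u (ord_tuple d))) => x Hx b.
apply: Hu b; apply: etrans Hx; apply: eq_bigr => i _.
by rewrite /= (nth_map i) ?size_enum_ord // nth_ord_enum.
Qed.

Lemma wedge_eq (u u' : 'I_d -> 'cV[F]_n) : u =1 u' -> wedge u = wedge u'.
Proof.
move=> Hu; apply/ffunP => J; rewrite !ffunE.
have -> : (\matrix_(a, b) u b (elt J a) 0) = \matrix_(a, b) u' b (elt J a) 0 :> 'M[F]_d.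
  by apply/matrixP => a b; rewrite !mxE Hu.
by [].
Qed.

Lemma wedge_alt (u : 'I_d -> 'cV[F]_n) p q : p != q -> u p = u q -> wedge u = 0.
Proof.
move=> pq Hu; apply/ffunP => J; rewrite !ffunE -det_tr.
by apply: (determinant_alternate pq) => c; rewrite !mxE Hu.
Qed.

Definition wc (p0 : 'I_d) (rest : 'I_d -> 'cV[F]_n) (v : 'cV[F]_n) :=
  wedge (fun p => if p == p0 then v else rest p).

Lemma wc_lin p0 rest (x : F) v w :
  wc p0 rest (x *: v + w) = x *: wc p0 rest v + wc p0 rest w.
Proof.
apply/ffunP => J; rewrite extpE /wc !ffunE.
pose u1 := fun p => if p == p0 then x *: v + w else rest p.
pose u2 := fun p => if p == p0 then v else rest p.
pose u3 := fun p => if p == p0 then w else rest p.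
have Hl : forall a, (lift p0 a == p0) = false.
  by move=> a; apply/negbTE; rewrite eq_sym neq_lift.
have := @determinant_multilinear _ _ (\matrix_(a, b) u1 b (elt J a) 0)^T
  (\matrix_(a, b) u2 b (elt J a) 0)^T (\matrix_(a, b) u3 b (elt J a) 0)^T p0 x 1.
rewrite !det_tr mul1r; apply.
- by apply/rowP => a; rewrite !mxE /u1 /u2 /u3 eqxx !mxE mul1r.
- by apply/matrixP => a b; rewrite !mxE /u1 /u2 /u3 Hl.
- by apply/matrixP => a b; rewrite !mxE /u1 /u2 /u3 Hl.
Qed.
Lemma indep_wedge (u : 'I_d -> 'cV[F]_n) : indep u -> wedge u != 0.
Proof.
move=> Hu.
pose M := \matrix_(r < n, b < d) u b r 0.
have rM : \rank M = d.
  rewrite -mxrank_tr; apply/eqP; change (row_free M^T); rewrite -kermx_eq0 -submx0; apply/row_subP => r.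
  set y := row r (kermx M^T).
  have Hy : y *m M^T = 0 by apply/sub_kermxP; exact: row_sub.
  have Hs : \sum_b y 0 b *: u b = 0.
    apply/matrixP => r0 c; rewrite (ord1 c).
    apply: etrans (_ : _ = (y *m M^T) 0 r0) _; last by rewrite Hy !mxE.
    rewrite summxE mxE; apply: eq_bigr => b _.
    by rewrite !mxE mulrC.
  have -> : y = 0 by apply/rowP => b; rewrite (Hu _ Hs b) mxE.
  by rewrite sub0mx.
pose f := maxrankfun M.
have rf : \rank (rowsub f M) = d.
  by rewrite (eqP (maxrowsub_free M)).
pose J := f @: [set: 'I_(\rank M)].
have cJ : #|J| == d by rewrite card_imset ?cardsT ?card_ord ?rM //; exact: maxrankfun_inj.
pose JJ : dsub n d := exist _ J cJ.
apply/negP => /eqP W0.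
move/ffunP: W0 => /(_ JJ); rewrite !ffunE /=.
set Q := \matrix_(a, b) _.
have sQ : (rowsub f M <= Q)%MS.
  apply/row_subP => a; rewrite row_rowsub.
  have fJ : f a \in J by apply: imset_f; rewrite inE.
  pose r := enum_rank_in fJ (f a).
  have e : #|J| = d := eqP cJ.
  pose a' := cast_ord e r.
  have Ea : elt JJ a' = f a.
    rewrite /elt /a' /=.
    have -> : cast_ord (esym (eqP (valP JJ))) (cast_ord e r) = r by apply: val_inj.
    by rewrite /r enum_rankK_in.
  have -> : row (f a) M = row a' Q by apply/rowP => b; rewrite !mxE Ea.
  exact: row_sub.
have rQ : row_free Q.
  rewrite /row_free eqn_leq rank_leq_row /= -{1}rf; exact: mxrankS.
move: rQ; rewrite row_free_unit unitmxE unitfE => /eqP; done.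
Qed.
Lemma freeI k (al : 'I_k -> 'cV[F]_n) (I : {set 'I_k}) (j0 : 'I_k) :
  basis_of fullv [seq al l | l <- enum I] ->
  forall c : 'I_k -> F, \sum_(l in I) c l *: al l = 0 -> forall l, l \in I -> c l = 0.
Proof.
move=> /basis_free Hf c Hc l lI.
move/(@freeP _ _ #|I| (map_tuple al (enum_tuple I))): Hf.
move=> /(_ (fun t => c (nth j0 (enum I) t))) H.
have HS : \sum_(t < #|I|) c (nth j0 (enum I) t) *: (map_tuple al (enum_tuple I))`_t = 0.
  apply: etrans Hc; rewrite -[RHS]big_enum [RHS](big_nth j0) -cardE [RHS]big_mkord.
  by apply: eq_bigr => t _; rewrite /= (nth_map j0) // -cardE.
have lI' : (index l (enum I) < #|I|)%N by rewrite cardE index_mem mem_enum.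
by have := H HS (Ordinal lI'); rewrite /= nth_index // mem_enum.
Qed.

Lemma indepA k (al : 'I_k -> 'cV[F]_n) (I : {set 'I_k}) (i : 'I_d -> 'I_k)
  (p0 : 'I_d) (l0 : 'I_k) (e : 'I_k -> F) :
  basis_of fullv [seq al l | l <- enum I] -> l0 \in I ->
  (forall p, p != p0 -> (i p \in I) && (i p != l0)) ->
  (forall p q, p != p0 -> q != p0 -> i p = i q -> p = q) ->
  e l0 != 0 ->
  indep (fun p => if p == p0 then \sum_(l in I) e l *: al l else al (i p)).
Proof.
move=> HI l0I Hi Hd el0 x Hx.
pose c l := x p0 * e l + \sum_(p | p != p0) (i p == l)%:R * x p.
have Hc : \sum_(l in I) c l *: al l = 0.
  apply: etrans Hx; rewrite (bigD1 p0) //= eqxx scaler_sumr.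
  rewrite /c; under eq_bigr => l _ do rewrite scalerDl scaler_suml -scalerA.
  rewrite big_split /=; congr (_ + _).
  rewrite exchange_big /=; apply: eq_bigr => p pp0; rewrite (negPf pp0).
  have /andP[ipI _] := Hi p pp0.
  rewrite (bigD1 (i p)) //= eqxx mul1r big1 ?addr0 // => l /andP[_ lip].
  by rewrite eq_sym (negPf lip) mul0r scale0r.
have Hp0 : x p0 = 0.
  have := freeI l0 HI Hc l0I; rewrite /c big1 ?addr0.
    by move/eqP; rewrite mulf_eq0 (negPf el0) orbF => /eqP.
  by move=> p pp0; have /andP[_ /negPf ->] := Hi p pp0; rewrite mul0r.
move=> b; have [->//|bp0] := eqVneq b p0.
have /andP[ibI _] := Hi b bp0.
have := freeI l0 HI Hc ibI; rewrite /c Hp0 mul0r add0r (bigD1 b) //= eqxx mul1r.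
rewrite big1 ?addr0 // => p /andP[pp0 pb].
case: eqP => [/(Hd _ _ pp0 bp0) E|_]; last by rewrite mul0r.
by rewrite E eqxx in pb.
Qed.
Lemma wc0 p0 rest : wc p0 rest 0 = 0.
Proof.
have H := wc_lin p0 rest 1 0 0; rewrite scaler0 addr0 scale1r in H.
have : wc p0 rest 0 + 0 = wc p0 rest 0 + wc p0 rest 0 by rewrite addr0 -H.
by move/addrI.
Qed.

Lemma wcZ p0 rest x v : wc p0 rest (x *: v) = x *: wc p0 rest v.
Proof. by have := wc_lin p0 rest x v 0; rewrite !addr0 wc0 addr0. Qed.

Lemma wcD p0 rest v w : wc p0 rest (v + w) = wc p0 rest v + wc p0 rest w.
Proof. by have := wc_lin p0 rest 1 v w; rewrite !scale1r. Qed.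

Lemma wc_sum p0 rest k (I : {set 'I_k}) (e : 'I_k -> F) (v : 'I_k -> 'cV[F]_n) :
  wc p0 rest (\sum_(l in I) e l *: v l) = \sum_(l in I) e l *: wc p0 rest (v l).
Proof.
rewrite (big_morph (wc p0 rest) (wcD p0 rest) (wc0 p0 rest)).
by apply: eq_bigr => l _; rewrite wcZ.
Qed.
End H.

Theorem lemma5p17 (F : fieldType) (char0 : [pchar F] =i pred0)
  (W : groupType) (k : nat) (s : 'I_k -> W) (gen : generates s)
  (n : nat) (rho1 rho2 : W -> 'M[F]_n)
  (rep1 : refl_rep s rho1) (rep2 : refl_rep s rho2)
  (irr1 : irreducible_rep rho1) (irr2 : irreducible_rep rho2)
  (alpha beta : 'I_k -> 'cV[F]_n)
  (Halpha : forall i, refl_vec (rho1 (s i)) (alpha i))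
  (Hbeta : forall i, refl_vec (rho2 (s i)) (beta i))
  (d : nat) (d_ge1 : (1 <= d)%N) (d_le : (d <= n.-1)%N)
  (psi : {linear extp F n d -> extp F n d}) (psi_bij : bijective psi)
  (psi_equiv : forall (w : W) (x : extp F n d),
      psi (ext_act (rho1 w) x) = ext_act (rho2 w) (psi x))
  (Hwedge : forall l : 'I_d -> 'I_k, free (fam alpha l) ->
      free (fam beta l) /\
      exists2 c : F, c != 0 &
        psi (wedge (fun a => alpha (l a))) = c *: wedge (fun a => beta (l a)))
  (I : {set 'I_k}) (HI : basis_of fullv [seq alpha l | l <- enum I])
  (h j : 'I_k) (hI : h \notin I) (jI : j \in I)
  (a b : 'I_k -> F)
  (Ha : alpha h = \sum_(l in I) a l *: alpha l)
  (Hb : beta h = \sum_(l in I) b l *: beta l)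
  (aj : a j != 0)
  (i : 'I_d -> 'I_k)
  (iI : forall p : 'I_d, val p != 0%N -> i p \in I :\ j)
  (idist : forall p q : 'I_d, val p != 0%N -> val q != 0%N -> i p = i q -> p = q) :
  (exists z1 z2 : F, [/\ z1 != 0, z2 != 0,
     psi (wedge (fun p => alpha (tup j i p))) = z1 *: wedge (fun p => beta (tup j i p)) &
     psi (wedge (fun p => alpha (tup h i p))) = z2 *: wedge (fun p => beta (tup h i p))])
  /\
  (forall z1 z2 : F,
     psi (wedge (fun p => alpha (tup j i p))) = z1 *: wedge (fun p => beta (tup j i p)) ->
     psi (wedge (fun p => alpha (tup h i p))) = z2 *: wedge (fun p => beta (tup h i p)) ->
     z1 * a j = z2 * b j).

Proof.
pose p0 : 'I_d := Ordinal d_ge1.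
have Hp : forall p : 'I_d, (p == p0) = (val p == 0%N) by move=> p; rewrite -val_eqE.
have Et : forall (v : 'I_k -> 'cV[F]_n) l,
    wedge (fun p => v (tup l i p)) = wc p0 (fun p => v (i p)) (v l).
  move=> v l; apply: wedge_eq => p; rewrite /tup Hp; by case: ifP.
have Ef : forall (v : 'I_k -> 'cV[F]_n) l,
    fam v (tup l i) = [seq (fun p => if p == p0 then v l else v (i p)) a | a <- enum 'I_d].
  move=> v l; apply: eq_map => p; rewrite /tup Hp; by case: ifP.
have Hd : forall p q : 'I_d, p != p0 -> q != p0 -> i p = i q -> p = q.
  by move=> p q pp0 qp0; apply: idist; rewrite -Hp.
have Sl : forall l, l \in I -> \sum_(m in I) (m == l)%:R *: alpha m = alpha l.
  move=> l lI; rewrite (bigD1 l) //= eqxx scale1r big1 ?addr0 // => m /andP[_ ml].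
  by rewrite (negPf ml) scale0r.
have indl : forall l, l \in I -> (forall p, p != p0 -> (i p \in I) && (i p != l)) ->
    indep (fun p => if p == p0 then alpha l else alpha (i p)).
  move=> l lI Hil.
  have := @indepA F n d k alpha I i p0 l (fun m => (m == l)%:R) HI lI Hil.
  rewrite eqxx oner_eq0 Sl // => H; exact: (H Hd isT).
have Hij : forall p, p != p0 -> (i p \in I) && (i p != j).
  by move=> p pp0; have := iI p; rewrite -Hp in_setD1 andbC => ->.
have indh : indep (fun p => if p == p0 then alpha h else alpha (i p)).
  have := @indepA F n d k alpha I i p0 j a HI jI Hij.
  rewrite -Ha => H; exact: (H Hd aj).
have indj := indl j jI Hij.
have fj : free (fam alpha (tup j i)) by rewrite Ef; exact: indep_free.
have fh : free (fam alpha (tup h i)) by rewrite Ef; exact: indep_free.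
have [fbj [z1 z1n Ez1]] := Hwedge (tup j i) fj.
have [fbh [z2 z2n Ez2]] := Hwedge (tup h i) fh.
split; first by exists z1, z2.
move=> {z1 z1n Ez1 z2 z2n Ez2} z1 z2.
rewrite !Et => E1 E2.
set fA := wc p0 (fun p => alpha (i p)) in E1 E2.
set gB := wc p0 (fun p => beta (i p)) in E1 E2.
have inj := bij_inj psi_bij.
have psi0 : forall x, psi x = 0 -> x = 0.
  by move=> x Hx; apply: inj; rewrite Hx linear0.
have fAj : fA (alpha j) != 0 by exact: indep_wedge indj.
have z1n : z1 != 0.
  apply/eqP => z0; move: E1; rewrite z0 scale0r => /psi0 /eqP; exact/negP.
have Claim : forall l, exists c : F, l \in I ->
    gB (beta l) = c *: psi (fA (alpha l)) /\ (l = j -> c = z1^-1).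
  move=> l; have [->|lj] := eqVneq l j.
    exists z1^-1 => _; split => //.
    by rewrite E1 scalerA mulVf // scale1r.
  case: (boolP [exists p, (p != p0) && (i p == l)]) => [/existsP[p /andP[pp0 /eqP ipl]]|nex].
    exists 0 => _; split; last by move=> E; rewrite E in lj; rewrite eqxx in lj.
    rewrite scale0r /gB /wc; apply: (wedge_alt (p := p0) (q := p)).
      by rewrite eq_sym.
    by rewrite eqxx (negPf pp0) ipl.
  have Hil : forall p, p != p0 -> (i p \in I) && (i p != l).
    move=> p pp0; have /andP[-> _] := Hij p pp0; apply/eqP => ipl.
    by move/existsP: nex; apply; exists p; rewrite pp0 ipl eqxx.
  case: (boolP (l \in I)) => lI; last by exists 0.
  have indl' := indl l lI Hil.
  have fl : free (fam alpha (tup l i)) by rewrite Ef; exact: indep_free.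
  have [_ [zl zln Ezl]] := Hwedge (tup l i) fl.
  rewrite !Et in Ezl.
  exists zl^-1 => _; split; last by move=> E; rewrite E eqxx in lj.
  by rewrite Ezl scalerA mulVf // scale1r.
have [c Hc] := fin_all_exists Claim.
have S1 : psi (fA (alpha h)) = \sum_(l in I) a l *: psi (fA (alpha l)).
  by rewrite Ha /fA wc_sum linear_sum; apply: eq_bigr => l _; rewrite linearZ.
have S2 : psi (fA (alpha h)) = \sum_(l in I) (z2 * (b l * c l)) *: psi (fA (alpha l)).
  rewrite E2 Hb /gB wc_sum scaler_sumr; apply: eq_bigr => l lI.
  rewrite -/gB; have [-> _] := Hc l lI; by rewrite !scalerA mulrA.
have S3 : fA (\sum_(l in I) (a l - z2 * (b l * c l)) *: alpha l) = 0.
  apply: psi0; rewrite /fA wc_sum linear_sum.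
  under eq_bigr do rewrite linearZZ scalerBl.
  by rewrite sumrB -S1 -S2 subrr.
have ej : a j - z2 * (b j * c j) = 0.
  apply/eqP; apply/negPn/negP => ejn.
  have := @indepA F n d k alpha I i p0 j (fun l => a l - z2 * (b l * c l)) HI jI Hij.
  move=> /(_ _ ejn) H.
  have /indep_wedge := H Hd.
  by rewrite -/(wc _ _ _) -/fA S3 eqxx.
have [_ cj] := Hc j jI; rewrite (cj erefl) in ej.
move/eqP: ej; rewrite subr_eq0 => /eqP ->.
by rewrite mulrCA; congr (_ * _); rewrite mulrC -mulrA mulVf // mulr1.
Qed.
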